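(* Every regular octahedron $O$ in $\mathbb{R}^3$ can be inside-out dissected with $124$ pieces.
   Context: An inside-out dissection of a polyhedron $P$ is a decomposition of $P$ into finitely many polyhedra $P_1,\ldots,P_k$ (called pieces; they have pairwise disjoint interiors and their union is $P$) such that (1) the pieces can be rearranged, applying to each piece only a rotation and a translation, to form a polyhedron $P'$ congruent to $P$, and (2) the boundary of $P'$ is composed of internal cuts of $P$, i.e. of (images of) portions of the pieces' boundaries that lay in the interior of $P$ rather than on the boundary of $P$. If such a decomposition exists, $P$ is said to be inside-out dissected with $k$ pieces. *)

(* Defs.v *)
From HB Require Import structures.
From mathcomp Require Import all_boot all_order all_algebra.
From mathcomp Require Import boolp classical_sets reals.
Set Implicit Arguments. Unset Strict Implicit. Unset Printing Implicit Defensive.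
Import Order.TTheory GRing.Theory Num.Theory.
Local Open Scope ring_scope.
Local Open Scope classical_set_scope.

Section Geometry.
Variable R : realType.

Definition pt := 'rV[R]_3.

Definition sqnorm (x : pt) : R := \sum_(i < 3) x ord0 i ^+ 2.

Definition interior (A : set pt) : set pt :=
  [set x | exists e : R, 0 < e /\ forall y, sqnorm (y - x) < e -> A y].
Definition closure (A : set pt) : set pt :=
  [set x | forall e : R, 0 < e -> exists y, A y /\ sqnorm (y - x) < e].
Definition boundary (A : set pt) : set pt := closure A `\` interior A.

Definition conv_hull (n : nat) (p : 'I_n -> pt) : set pt :=
  [set x | exists w : 'I_n -> R, (forall i, 0 <= w i) /\ \sum_(i < n) w i = 1
       /\ x = \sum_(i < n) w i *: p i].

Definition nondeg_tetra (p : 'I_4 -> pt) : Prop :=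
  \det (\matrix_(i < 3) (p (lift ord0 i) - p ord0)) != 0.

Definition polyhedron (P : set pt) : Prop :=
  exists (n : nat) (T : 'I_n -> 'I_4 -> pt),
    (0 < n)%N /\ (forall k, nondeg_tetra (T k)) /\
    (forall x, P x <-> exists k, conv_hull (T k) x).

Definition orthogonal_mx (Q : 'M[R]_3) : Prop := Q *m Q^T = 1%:M.
Definition rotation_mx (Q : 'M[R]_3) : Prop := orthogonal_mx Q /\ \det Q = 1.

Definition motion (Q : 'M[R]_3) (t : pt) (x : pt) : pt := x *m Q + t.

Definition inside_out_dissectable (P : set pt) (k : nat) : Prop :=
  exists (Pc : 'I_k -> set pt) (Q : 'I_k -> 'M[R]_3) (t : 'I_k -> pt),
    (forall i, polyhedron (Pc i)) /\
    (forall i j, i != j -> interior (Pc i) `&` interior (Pc j) = set0) /\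
    (forall x, P x <-> exists i, Pc i x) /\
    (forall i, rotation_mx (Q i)) /\
    (forall i j, i != j ->
       interior (motion (Q i) (t i) @` Pc i) `&`
       interior (motion (Q j) (t j) @` Pc j) = set0) /\
    (let P' := [set y | exists i, (motion (Q i) (t i) @` Pc i) y] in
     (exists (Q0 : 'M[R]_3) (t0 : pt), orthogonal_mx Q0 /\
        P' = motion Q0 t0 @` P) /\
     (* (2) the boundary of P' consists of images of internal cuts *)
     boundary P' `<=`
       closure [set y | exists i,
                 (motion (Q i) (t i) @` (boundary (Pc i) `&` interior P)) y]).

(* regular octahedron with center c, circumradius r > 0 and orientation U
   (U orthogonal): convex hull of c +- r * (rows of U) *)
Definition oct_vertex (c : pt) (r : R) (U : 'M[R]_3) (j : 'I_6) : pt :=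
  c + (if (j < 3)%N then r else - r) *: row (inord (j %% 3)) U.

Definition regular_octahedron (c : pt) (r : R) (U : 'M[R]_3) : set pt :=
  conv_hull (oct_vertex c r U).

End Geometry.

(* Main.v *)
Require Import Defs.
From HB Require Import structures.
From mathcomp Require Import all_boot all_order all_algebra.
From mathcomp Require Import boolp classical_sets reals.
From mathcomp Require Import ring lra.
Require Import Defs.
Set Implicit Arguments. Unset Strict Implicit. Unset Printing Implicit Defensive.
Import Order.TTheory GRing.Theory Num.Theory.
Local Open Scope ring_scope.
Local Open Scope classical_set_scope.

Lemma det3 (R : comNzRingType) (A : 'M[R]_3) : \det A =
  A 0 0 * (A 1 1 * A 2 2 - A 1 2 * A 2 1) - A 0 1 * (A 1 0 * A 2 2 - A 1 2 * A 2 0)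
  + A 0 2 * (A 1 0 * A 2 1 - A 1 1 * A 2 0).
Proof.
rewrite (expand_det_row _ ord0) !big_ord_recl big_ord0 /cofactor.
rewrite !(expand_det_row _ ord0) !big_ord_recl !big_ord0 /cofactor !det_mx11 !mxE /=.
set f := fun i j : nat => A (inord i) (inord j).
have E : forall i j : 'I_3, A i j = f i j by move=> i j; rewrite /f !inord_val.
rewrite !E /= /f /= !expr0 !expr1 /=. ring.
Qed.

Lemma sum3 (V : nmodType) (F : 'I_3 -> V) : \sum_(i < 3) F i = F 0 + F 1 + F 2.
Proof.
rewrite !big_ord_recl big_ord0 addr0 addrA.
set f := fun i : nat => F (inord i).
have E : forall i : 'I_3, F i = f i by move=> i; rewrite /f inord_val.
by rewrite !E.
Qed.

Definition o4 (k : nat) (h : (k < 4)%N) : 'I_4 := Ordinal h.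

Lemma sum4 (V : nmodType) (F : 'I_4 -> V) :
  \sum_(i < 4) F i = F (@o4 0 isT) + F (@o4 1 isT) + F (@o4 2 isT) + F (@o4 3 isT).
Proof.
rewrite !big_ord_recl big_ord0 addr0 !addrA.
set f := fun i : nat => F (inord i).
have E : forall i : 'I_4, F i = f i by move=> i; rewrite /f inord_val.
by rewrite !E.
Qed.

Definition mk4 (T : Type) (a b c d : T) (i : 'I_4) : T := nth a [:: a; b; c; d] i.

Section Basics.
Variable R : realType.
Notation point := (pt R).

Definition dot (u x : point) : R := \sum_(i < 3) u 0 i * x 0 i.

Lemma dotE u x : dot u x = u 0 0 * x 0 0 + u 0 1 * x 0 1 + u 0 2 * x 0 2.
Proof. by rewrite /dot sum3. Qed.

Lemma sqnormE (x : point) : sqnorm x = x 0 0 ^+ 2 + x 0 1 ^+ 2 + x 0 2 ^+ 2.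
Proof. by rewrite /sqnorm sum3. Qed.

Lemma sqnorm_ge0 (x : point) : 0 <= sqnorm x.
Proof. rewrite sqnormE; nra. Qed.

Lemma sqnorm0 : sqnorm (0 : point) = 0.
Proof. by rewrite sqnormE !mxE; ring. Qed.

Lemma ptP (x y : point) : x 0 0 = y 0 0 -> x 0 1 = y 0 1 -> x 0 2 = y 0 2 -> x = y.
Proof.
move=> h0 h1 h2; apply/rowP => j.
have -> : j = inord j by rewrite inord_val.
case: j => [[|[|[|//]]] Hj] /=.
- by have -> : (inord 0 : 'I_3) = 0 by apply/val_inj; rewrite /= inordK.
- by have -> : (inord 1 : 'I_3) = 1 by apply/val_inj; rewrite /= inordK.
- by have -> : (inord 2 : 'I_3) = 2 by apply/val_inj; rewrite /= inordK.
Qed.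

Lemma sqnorm_gt0 (x : point) : x != 0 -> 0 < sqnorm x.
Proof.
move=> hx; rewrite lt_neqAle sqnorm_ge0 andbT; apply/eqP => h.
move/eqP: hx; apply; apply: ptP; rewrite !mxE; move: h; rewrite sqnormE => h; nra.
Qed.

Lemma coord_lt (x : point) (d : R) (i : 'I_3) : 0 < d -> sqnorm x < d ^+ 2 -> `|x 0 i| < d.
Proof.
move=> hd; rewrite sqnormE => h.
have hi : x 0 i ^+ 2 < d ^+ 2.
  have -> : i = inord i by rewrite inord_val.
  case: i => [[|[|[|//]]] Hi] /=.
  - have -> : (inord 0 : 'I_3) = 0 by apply/val_inj; rewrite /= inordK.
    nra.
  - have -> : (inord 1 : 'I_3) = 1 by apply/val_inj; rewrite /= inordK.
    nra.
  - have -> : (inord 2 : 'I_3) = 2 by apply/val_inj; rewrite /= inordK.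
    nra.
rewrite ltr_norml; apply/andP; split; nra.
Qed.

Lemma interior_sub (A : set point) : interior A `<=` A.
Proof.
move=> x [e [he H]]; apply: H; by rewrite subrr sqnorm0.
Qed.

Lemma sub_closure (A : set point) : A `<=` closure A.
Proof. move=> x Ax e he; exists x; by rewrite subrr sqnorm0. Qed.

Lemma interior_mono (A B : set point) : A `<=` B -> interior A `<=` interior B.
Proof. move=> AB x [e [he H]]; exists e; split => // y /H; exact: AB. Qed.

Lemma closure_mono (A B : set point) : A `<=` B -> closure A `<=` closure B.
Proof. move=> AB x H e /H [y [Ay hy]]; exists y; split => //; exact: AB. Qed.

Definition sepf (u : point) (b : R) (X Y : set point) :=
  u != 0 /\ (forall x, X x -> 0 <= dot u x + b) /\ (forall x, Y x -> dot u x + b <= 0).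
Definition sep (X Y : set point) := exists u b, sepf u b X Y.

Lemma sep_not_interior (u : point) b (X : set point) z :
  u != 0 -> (forall x, X x -> 0 <= dot u x + b) -> dot u z + b <= 0 -> ~ interior X z.
Proof.
move=> u0 HX hz [e [he H]].
set s := sqnorm u.
have s0 : 0 < s by exact: sqnorm_gt0.
set eps := e / (1 + e) / (1 + s).
have eps0 : 0 < eps by rewrite /eps !divr_gt0 // ?addr_gt0.
have eps1 : eps * (1 + s) = e / (1 + e).
  by rewrite /eps -mulrA mulVf ?mulr1 // gt_eqF // addr_gt0.
have ee : e / (1 + e) < e.
  rewrite ltr_pdivrMr ?addr_gt0 //; nra.
have ee1 : e / (1 + e) < 1.
  rewrite ltr_pdivrMr ?addr_gt0 //; nra.
have hX : X (z - eps *: u).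
  apply: H.
  have -> : z - eps *: u - z = - (eps *: u) by rewrite addrAC subrr add0r.
  rewrite sqnormE !mxE -/s.
  have -> : (- (eps * u 0 0)) ^+ 2 + (- (eps * u 0 1)) ^+ 2 + (- (eps * u 0 2)) ^+ 2
     = eps ^+ 2 * s by rewrite /s sqnormE; ring.
  have h1 : eps < 1 by nra.
  nra.
have := HX _ hX; rewrite /dot.
have -> : \sum_(i < 3) u 0 i * (z - eps *: u) 0 i = dot u z - eps * s.
  rewrite /s sqnormE dotE sum3 !mxE; ring.
move=> h. have : 0 < eps * s by exact: mulr_gt0.
lra.
Qed.

Lemma sep_disj (X Y : set point) : sep X Y -> interior X `&` interior Y = set0.
Proof.
move=> [u [b [u0 [HX HY]]]]; apply/seteqP; split => // z [iX iY].
have h1 := HX z (interior_sub iX); have h2 := HY z (interior_sub iY).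
by apply: (sep_not_interior u0 HX _ iX); lra.
Qed.

Lemma sep_sub (X Y X' Y' : set point) : X' `<=` X -> Y' `<=` Y -> sep X Y -> sep X' Y'.
Proof.
move=> h1 h2 [u [b [u0 [HX HY]]]]; exists u, b; split => //; split.
- by move=> x /h1 /HX.
- by move=> x /h2 /HY.
Qed.

End Basics.

Section Gen.
Variable R : realType.
Notation point := (pt R).

Lemma trmxZ' m n (a : R) (M : 'M[R]_(m, n)) : (a *: M)^T = a *: M^T.
Proof. by apply/matrixP => i j; rewrite !mxE. Qed.

Lemma sqnorm_mx (v : point) : sqnorm v = (v *m v^T) 0 0.
Proof. rewrite /sqnorm !mxE; apply: eq_bigr => j _; by rewrite !mxE expr2. Qed.

Lemma motion_conv n Q (t : point) (w : 'I_n -> R) (p : 'I_n -> point) :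
  \sum_i w i = 1 ->
  motion Q t (\sum_i w i *: p i) = \sum_i w i *: motion Q t (p i).
Proof.
move=> hw; rewrite /motion mulmx_suml.
rewrite {1}(_ : t = \sum_i w i *: t); last by rewrite -scaler_suml hw scale1r.
rewrite -big_split /=; apply: eq_bigr => i _; by rewrite -scalemxAl scalerDr.
Qed.

Lemma conv_img n Q (t : point) (p : 'I_n -> point) :
  motion Q t @` conv_hull p = conv_hull (fun i => motion Q t (p i)).
Proof.
apply/seteqP; split.
- move=> y [x [w [w0 [w1 ->]]] <-]; exists w; split => //; split => //.
  exact: motion_conv.
- move=> y [w [w0 [w1 ->]]]; exists (\sum_i w i *: p i).
    by exists w.
  exact: motion_conv.
Qed.

Lemma conv_ext n (p q : 'I_n -> point) : (forall i, p i = q i) -> conv_hull p = conv_hull q.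
Proof. by move=> h; have -> : p = q by apply: funext. Qed.

Lemma det_nz_of (A : 'M[R]_3) s : 0 < s -> A *m A^T = s%:M -> \det A != 0.
Proof.
move=> hs hA; apply/eqP => h.
have := congr1 determinant hA; rewrite det_mulmx det_tr h mul0r det_scalar => h'.
have : s ^+ 3 == 0 by rewrite -h' eqxx.
by rewrite expf_eq0 /= gt_eqF.
Qed.

Lemma img_comp (f g : point -> point) (X : set point) : f @` (g @` X) = (fun x => f (g x)) @` X.
Proof. by rewrite image_comp. Qed.

End Gen.

Section Sim.
Variables (R : realType) (A : 'M[R]_3) (s : R) (t : pt R).
Hypotheses (hs : 0 < s) (hA : A *m A^T = s%:M).
Notation point := (pt R).

Definition Ainv := s^-1 *: A^T.
Definition phi := motion A t.
Definition psi := motion Ainv (- (t *m Ainv)).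

Lemma s_neq0 : s != 0. Proof. by rewrite gt_eqF. Qed.

Lemma AAinv : A *m Ainv = 1%:M.
Proof. by rewrite /Ainv -scalemxAr hA scale_scalar_mx mulVf // s_neq0. Qed.

Lemma AinvA : Ainv *m A = 1%:M.
Proof. exact: (mulmx1C AAinv). Qed.

Lemma AtA : A^T *m A = s%:M.
Proof.
have := AinvA; rewrite /Ainv -scalemxAl => h.
have := congr1 (fun M => s *: M) h; rewrite scalerA mulfV ?s_neq0 // scale1r => ->.
by rewrite scale_scalar_mx mulr1.
Qed.

Lemma psiK x : psi (phi x) = x.
Proof.
by rewrite /psi /phi /motion mulmxDl -mulmxA AAinv mulmx1 addrK.
Qed.

Lemma phiK y : phi (psi y) = y.
Proof.
by rewrite /psi /phi /motion mulmxDl -mulmxA AinvA mulmx1 mulNmx -mulmxA AinvA mulmx1 subrK.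
Qed.

Lemma phi_inj : injective phi.
Proof. by move=> x y h; rewrite -(psiK x) h psiK. Qed.

Lemma sqnorm_mulA (v : point) : sqnorm (v *m A) = s * sqnorm v.
Proof.
rewrite !sqnorm_mx trmx_mul mulmxA -(mulmxA v) hA mul_mx_scalar -scalemxAl.
by rewrite mxE.
Qed.

Lemma phi_dist x y : sqnorm (phi x - phi y) = s * sqnorm (x - y).
Proof.
by rewrite /phi /motion opprD addrACA subrr addr0 -mulmxBl sqnorm_mulA.
Qed.

Lemma psi_dist x y : sqnorm (psi x - psi y) = s^-1 * sqnorm (x - y).
Proof.
by rewrite -{2}(phiK x) -{2}(phiK y) phi_dist mulrA mulVf ?s_neq0 // mul1r.
Qed.

Lemma imgP (X : set point) y : (phi @` X) y <-> X (psi y).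
Proof.
split; first by move=> [x Xx <-]; rewrite psiK.
by move=> h; exists (psi y) => //; rewrite phiK.
Qed.

Lemma interior_img (X : set point) : interior (phi @` X) = phi @` interior X.
Proof.
apply/seteqP; split.
- move=> y [e [he H]]; apply/imgP; exists (e / s); split; first exact: divr_gt0.
  move=> x hx; rewrite -(psiK x); apply/imgP; apply: H.
  rewrite -(phiK y) phi_dist. move: hx; rewrite ltr_pdivlMr // mulrC //.
- move=> y /imgP [e [he H]]; exists (e * s); split; first exact: mulr_gt0.
  move=> z hz; apply/imgP; apply: H.
  by rewrite psi_dist mulrC ltr_pdivrMr.
Qed.

Lemma closure_img (X : set point) : closure (phi @` X) = phi @` closure X.
Proof.
apply/seteqP; split.
- move=> y H; apply/imgP => e he.
  have [z [Xz hz]] := H (e * s) (mulr_gt0 he hs).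
  exists (psi z); split; first by move/imgP: Xz.
  by rewrite psi_dist mulrC ltr_pdivrMr.
- move=> y /imgP H e he.
  have [z [Xz hz]] := H (e / s) (divr_gt0 he hs).
  exists (phi z); split; first by apply/imgP; rewrite psiK.
  rewrite -(phiK y) phi_dist. move: hz; rewrite ltr_pdivlMr // mulrC //.
Qed.

Lemma img_setI (X Y : set point) : phi @` (X `&` Y) = phi @` X `&` phi @` Y.
Proof.
apply/seteqP; split => y.
- by move/imgP => [h1 h2]; split; apply/imgP.
- by move=> [/imgP h1 /imgP h2]; apply/imgP.
Qed.

Lemma img_setD (X Y : set point) : phi @` (X `\` Y) = phi @` X `\` phi @` Y.
Proof.
apply/seteqP; split => y.
- by move/imgP => [h1 h2]; split; [apply/imgP | move/imgP].
- by move=> [/imgP h1 h2]; apply/imgP; split => // /imgP.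
Qed.

Lemma boundary_img (X : set point) : boundary (phi @` X) = phi @` boundary X.
Proof. by rewrite /boundary img_setD closure_img interior_img. Qed.

Lemma img_set0 : phi @` set0 = set0.
Proof. by apply/seteqP; split => y // [x]. Qed.

Lemma nondeg_img (p : 'I_4 -> point) : nondeg_tetra p -> nondeg_tetra (fun i => phi (p i)).
Proof.
rewrite /nondeg_tetra => h.
have -> : \matrix_(i < 3) (phi (p (lift ord0 i)) - phi (p ord0))
   = (\matrix_(i < 3) (p (lift ord0 i) - p ord0)) *m A.
  apply/row_matrixP => i; rewrite row_mul !rowK /phi /motion.
  by rewrite opprD addrACA subrr addr0 -mulmxBl.
by rewrite det_mulmx mulf_neq0 // (det_nz_of hs hA).
Qed.

Definition conjQ (Q : 'M[R]_3) := s^-1 *: (A^T *m Q *m A).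
Definition conjt (Q : 'M[R]_3) (tM : point) := tM *m A + t - t *m conjQ Q.

Lemma A_conjQ Q : A *m conjQ Q = Q *m A.
Proof.
rewrite /conjQ -scalemxAr !mulmxA hA mul_scalar_mx -!scalemxAl scalerA mulVf ?s_neq0 //.
by rewrite scale1r.
Qed.

Lemma conj_motion Q tM x : phi (motion Q tM x) = motion (conjQ Q) (conjt Q tM) (phi x).
Proof.
rewrite /phi /motion /conjt !mulmxDl -!mulmxA A_conjQ.
rewrite -!addrA; congr (_ + _); rewrite addrCA; congr (_ + _).
by rewrite addrCA subrr addr0.
Qed.

Lemma conj_img Q tM (X : set point) :
  phi @` (motion Q tM @` X) = motion (conjQ Q) (conjt Q tM) @` (phi @` X).
Proof. by rewrite !img_comp; apply: eq_imagel => x _; rewrite conj_motion. Qed.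

Lemma conj_orth Q : orthogonal_mx Q -> orthogonal_mx (conjQ Q).
Proof.
rewrite /orthogonal_mx /conjQ => h.
have e1 : A^T *m Q *m A *m (A^T *m Q *m A)^T = (s * s)%:M.
  rewrite !trmx_mul trmxK.
  have -> : A^T *m Q *m A *m (A^T *m (Q^T *m A)) = A^T *m Q *m (A *m A^T) *m Q^T *m A.
    by rewrite !mulmxA.
  rewrite hA mul_mx_scalar -!scalemxAl -(mulmxA A^T) h mulmx1 AtA.
  by rewrite scale_scalar_mx.
rewrite trmxZ' -scalemxAl -scalemxAr scalerA e1 scale_scalar_mx.
have -> : s^-1 * s^-1 * (s * s) = 1 by field; rewrite s_neq0.
by [].
Qed.

Lemma conj_rot Q : rotation_mx Q -> rotation_mx (conjQ Q).
Proof.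
move=> [hQ dQ]; split; first exact: conj_orth.
rewrite /conjQ detZ !det_mulmx det_tr dQ mulr1.
have hd : \det A * \det A = s ^+ 3.
  by rewrite -{2}det_tr -det_mulmx hA det_scalar.
by rewrite hd exprVn mulVf // expf_neq0 // s_neq0.
Qed.

End Sim.

Section Tetra.
Variable R : realType.
Notation point := (pt R).

Notation o0 := (@o4 0 isT).
Notation o1 := (@o4 1 isT).
Notation o2 := (@o4 2 isT).
Notation o3 := (@o4 3 isT).

Lemma p_mk4 (T : Type) (p : 'I_4 -> T) : p = mk4 (p o0) (p o1) (p o2) (p o3).
Proof.
apply: funext => i; have -> : i = inord i by rewrite inord_val.
case: i => [[|[|[|[|//]]]] Hi] /=.
all: rewrite /mk4 inordK //=; congr p; apply: val_inj; by rewrite /= inordK.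
Qed.

Lemma dot_mx (u x : point) : dot u x = (x *m u^T) 0 0.
Proof. rewrite /dot !mxE; apply: eq_bigr => j _; by rewrite !mxE mulrC. Qed.

Lemma dot4 (u : point) b a1 a2 a3 a4 (A B C D : point) : a1 + a2 + a3 + a4 = 1 ->
  dot u (a1 *: A + a2 *: B + a3 *: C + a4 *: D) + b =
  a1 * (dot u A + b) + a2 * (dot u B + b) + a3 * (dot u C + b) + a4 * (dot u D + b).
Proof.
move=> h; rewrite !dotE !mxE.
have -> : a4 = 1 - a1 - a2 - a3 by lra.
ring.
Qed.

Lemma motion4 Q (t : point) a1 a2 a3 a4 (A B C D : point) : a1 + a2 + a3 + a4 = 1 ->
  motion Q t (a1 *: A + a2 *: B + a3 *: C + a4 *: D) =
  a1 *: motion Q t A + a2 *: motion Q t B + a3 *: motion Q t C + a4 *: motion Q t D.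
Proof.
move=> h; rewrite /motion !mulmxDl -!scalemxAl !scalerDr.
rewrite {1}(_ : t = (a1 + a2 + a3 + a4) *: t); last by rewrite h scale1r.
rewrite !scalerDl.
apply: ptP; rewrite !mxE; ring.
Qed.

Lemma convP4 (A B C D x : point) :
  conv_hull (mk4 A B C D) x <->
  exists a1 a2 a3 a4, [/\ 0 <= a1, 0 <= a2, 0 <= a3, 0 <= a4 &
     a1 + a2 + a3 + a4 = 1 /\ x = a1 *: A + a2 *: B + a3 *: C + a4 *: D].
Proof.
split.
- move=> [w [w0 [w1 ->]]]; exists (w o0), (w o1), (w o2), (w o3).
  by split => //; split; [rewrite -w1 sum4 | rewrite sum4].
- move=> [a1 [a2 [a3 [a4 [h1 h2 h3 h4 [hs ->]]]]]].
  exists (mk4 a1 a2 a3 a4); split.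
    move=> i; have -> : i = inord i by rewrite inord_val.
    by case: i => [[|[|[|[|//]]]] Hi] /=; rewrite /mk4 /= inordK.
  by rewrite !sum4.
Qed.

Lemma conv_swap (A B C D : point) : conv_hull (mk4 B A D C) = conv_hull (mk4 A B C D).
Proof.
apply/seteqP; split => x /convP4 [a1 [a2 [a3 [a4 [h1 h2 h3 h4 [hs ->]]]]]]; apply/convP4.
- exists a2, a1, a4, a3; split => //; split; first lra.
  by apply: ptP; rewrite !mxE; ring.
- exists a2, a1, a4, a3; split => //; split; first lra.
  by apply: ptP; rewrite !mxE; ring.
Qed.

Definition det3v (a b c : point) : R :=
  a 0 0 * (b 0 1 * c 0 2 - b 0 2 * c 0 1) - a 0 1 * (b 0 0 * c 0 2 - b 0 2 * c 0 0)
  + a 0 2 * (b 0 0 * c 0 1 - b 0 1 * c 0 0).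

Lemma nondeg_mk4 (A B C D : point) :
  nondeg_tetra (mk4 A B C D) <-> det3v (B - A) (C - A) (D - A) != 0.
Proof.
rewrite /nondeg_tetra det3 !mxE /det3v.
have e0 : mk4 A B C D (lift ord0 (0 : 'I_3)) = B by [].
have e1 : mk4 A B C D (lift ord0 (1 : 'I_3)) = C by [].
have e2 : mk4 A B C D (lift ord0 (2 : 'I_3)) = D by [].
have e3 : mk4 A B C D ord0 = A by [].
rewrite ?e0 ?e1 ?e2 ?e3 !mxE.
by [].
Qed.

Lemma bary (p : 'I_4 -> point) (v : 'I_4 -> R) : nondeg_tetra p ->
  exists u b, forall i, dot u (p i) + b = v i.
Proof.
rewrite /nondeg_tetra => hN.
set N := \matrix_(i < 3) (p (lift ord0 i) - p ord0) in hN.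
have uN : N \in unitmx by rewrite unitmxE unitfE.
set c : 'cV[R]_3 := \col_(i < 3) (v (lift ord0 i) - v ord0).
set u : point := (invmx N *m c)^T.
exists u, (v ord0 - dot u (p ord0)) => i.
case: (unliftP ord0 i) => [j ->|->]; last by rewrite addrC subrK.
have : dot u (p (lift ord0 j) - p ord0) = c j 0.
  rewrite dot_mx /u trmxK.
  have -> : p (lift ord0 j) - p ord0 = row j N by rewrite rowK.
  by rewrite -row_mul mulKVmx // mxE.
rewrite /c mxE.
have -> : dot u (p (lift ord0 j) - p ord0) = dot u (p (lift ord0 j)) - dot u (p ord0).
  by rewrite !dotE !mxE; ring.
move=> h; rewrite addrA (addrC _ (v ord0)) -addrA.
by rewrite -[dot u (p (lift ord0 j)) - _]/(dot u (p (lift ord0 j)) - dot u (p ord0)) h; ring.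
Qed.

Lemma bary_nz (p : 'I_4 -> point) u b (v : 'I_4 -> R) i j :
  (forall i, dot u (p i) + b = v i) -> v i != v j -> u != 0.
Proof.
move=> h vij; apply/eqP => u0; move: vij; rewrite -!h u0.
by rewrite !dotE !mxE !mul0r !add0r eqxx.
Qed.

Lemma small_param (K e : R) : 0 <= K -> 0 < e -> exists tau, [/\ 0 < tau, tau <= 1 & tau ^+ 2 * K < e].
Proof.
move=> K0 e0.
set tau := e / (1 + e) / (1 + K).
have hK : 0 < 1 + K by lra.
have he : 0 < 1 + e by lra.
have t0 : 0 < tau by rewrite /tau !divr_gt0.
have t1 : tau * (1 + K) = e / (1 + e).
  by rewrite /tau -mulrA mulVf ?mulr1 // gt_eqF.
have ee : e / (1 + e) < e by rewrite ltr_pdivrMr //; nra.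
have ee1 : e / (1 + e) < 1 by rewrite ltr_pdivrMr //; nra.
exists tau; split => //; nra.
Qed.

End Tetra.

Section IOD.
Variable R : realType.
Notation point := (pt R).

Definition cuts k (Pc : 'I_k -> set point) (Q : 'I_k -> 'M[R]_3) (t : 'I_k -> point) (S : set point) :=
  [set y | exists i, (motion (Q i) (t i) @` (boundary (Pc i) `&` interior S)) y].

Definition IOD (P P' S : set point) (k : nat) : Prop :=
  exists (Pc : 'I_k -> set point) (Q : 'I_k -> 'M[R]_3) (t : 'I_k -> point),
  (forall i, exists p, nondeg_tetra p /\ Pc i = conv_hull p) /\
  (forall i j, i != j -> interior (Pc i) `&` interior (Pc j) = set0) /\
  P = [set x | exists i, Pc i x] /\
  (forall i, rotation_mx (Q i)) /\
  (forall i j, i != j -> interior (motion (Q i) (t i) @` Pc i) `&`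
                          interior (motion (Q j) (t j) @` Pc j) = set0) /\
  P' = [set y | exists i, (motion (Q i) (t i) @` Pc i) y] /\
  P' `&` boundary S `<=` closure (cuts Pc Q t S).

Lemma img_ex (f : point -> point) k (Z : 'I_k -> set point) :
  f @` [set x | exists i, Z i x] = [set y | exists i, (f @` Z i) y].
Proof.
apply/seteqP; split => y.
- by move=> [x [i Zx] <-]; exists i; exists x.
- by move=> [i [x Zx <-]]; exists x => //; exists i.
Qed.

Section Transfer.
Variables (A : 'M[R]_3) (s : R) (t0 : point).
Hypotheses (hs : 0 < s) (hA : A *m A^T = s%:M).
Local Notation f := (phi A t0).

Lemma disj_img (X Y : set point) : interior X `&` interior Y = set0 ->
  interior (f @` X) `&` interior (f @` Y) = set0.
Proof.
move=> h; rewrite !(interior_img t0 hs hA) -(img_setI t0 hs hA) h.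
exact: img_set0.
Qed.

Lemma IOD_transfer P P' S k : IOD P P' S k -> IOD (f @` P) (f @` P') (f @` S) k.
Proof.
move=> [Pc [Q [t [Ht [Hd [HP [Hr [Hd' [HP' Hc]]]]]]]]].
exists (fun i => f @` Pc i), (fun i => conjQ A s (Q i)), (fun i => conjt A s t0 (Q i) (t i)).
split; [|split; [|split; [|split; [|split; [|split]]]]].
- move=> i; have [p [np ->]] := Ht i; exists (fun j => f (p j)); split.
    exact: (nondeg_img t0 hs hA).
  exact: conv_img.
- by move=> i j /Hd /disj_img.
- by rewrite HP img_ex.
- by move=> i; apply: (conj_rot hs hA).
- move=> i j /Hd' h; rewrite -!(conj_img t0 hs hA); exact: disj_img.
- rewrite HP' img_ex; apply/seteqP; split => y [i h]; exists i.
    by move: h; rewrite (conj_img t0 hs hA).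
  by rewrite (conj_img t0 hs hA).
- move=> y [/(imgP t0 hs hA) hP]; rewrite (boundary_img t0 hs hA) => /(imgP t0 hs hA) hS.
  have : (f @` closure (cuts Pc Q t S)) y.
    by apply/(imgP t0 hs hA); apply: Hc; split.
  rewrite -(closure_img t0 hs hA); apply: closure_mono.
  rewrite /cuts img_ex => z [i hz]; exists i.
  by rewrite (boundary_img t0 hs hA) (interior_img t0 hs hA) -(img_setI t0 hs hA) -(conj_img t0 hs hA).
Qed.

End Transfer.


Definition sel T k1 k2 (f1 : 'I_k1 -> T) (f2 : 'I_k2 -> T) (i : 'I_(k1 + k2)) : T :=
  match split i with inl j => f1 j | inr j => f2 j end.

Lemma selL T k1 k2 (f1 : 'I_k1 -> T) (f2 : 'I_k2 -> T) j : sel f1 f2 (lshift k2 j) = f1 j.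
Proof. by rewrite /sel -[lshift k2 j]/(unsplit (inl j)) unsplitK. Qed.

Lemma selR T k1 k2 (f1 : 'I_k1 -> T) (f2 : 'I_k2 -> T) j : sel f1 f2 (rshift k1 j) = f2 j.
Proof. by rewrite /sel -[rshift k1 j]/(unsplit (inr j)) unsplitK. Qed.

Lemma ordLR k1 k2 (i : 'I_(k1 + k2)) :
  (exists j, i = lshift k2 j) \/ (exists j, i = rshift k1 j).
Proof. rewrite -(splitK i); case: (split i) => j; [left|right]; by exists j. Qed.

Lemma sep_sym (X Y : set point) : sep X Y -> sep Y X.
Proof.
move=> [u [b [u0 [hX hY]]]]; exists (- u), (- b); split; first by rewrite oppr_eq0.
split => x hx.
- have := hY x hx; rewrite !dotE !mxE; lra.
- have := hX x hx; rewrite !dotE !mxE; lra.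
Qed.

Lemma IOD_union P1 P1' P2 P2' S k1 k2 :
  IOD P1 P1' S k1 -> IOD P2 P2' S k2 -> sep P1 P2 -> sep P1' P2' ->
  IOD (P1 `|` P2) (P1' `|` P2') S (k1 + k2).
Proof.
move=> [Pc1 [Q1 [t1 [Ht1 [Hd1 [HP1 [Hr1 [Hd1' [HP1' Hc1]]]]]]]]].
move=> [Pc2 [Q2 [t2 [Ht2 [Hd2 [HP2 [Hr2 [Hd2' [HP2' Hc2]]]]]]]]] hsp hsp'.
have sub1 j : Pc1 j `<=` P1 by rewrite HP1 => x h; exists j.
have sub2 j : Pc2 j `<=` P2 by rewrite HP2 => x h; exists j.
have sub1' j : motion (Q1 j) (t1 j) @` Pc1 j `<=` P1' by rewrite HP1' => x h; exists j.
have sub2' j : motion (Q2 j) (t2 j) @` Pc2 j `<=` P2' by rewrite HP2' => x h; exists j.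
exists (sel Pc1 Pc2), (sel Q1 Q2), (sel t1 t2).
split; [|split; [|split; [|split; [|split; [|split]]]]].
- by move=> i; case: (ordLR i) => [[j ->]|[j ->]]; rewrite ?selL ?selR.
- move=> i j; case: (ordLR i) => [[i1 ->]|[i1 ->]]; case: (ordLR j) => [[j1 ->]|[j1 ->]];
    rewrite ?selL ?selR => ne.
  + by apply: Hd1; apply: contraNneq ne => ->.
  + exact: sep_disj (sep_sub (sub1 i1) (sub2 j1) hsp).
  + rewrite setIC; exact: sep_disj (sep_sub (sub1 j1) (sub2 i1) hsp).
  + by apply: Hd2; apply: contraNneq ne => ->.
- rewrite HP1 HP2; apply/seteqP; split => x.
  + by case=> [[i h]|[i h]]; [exists (lshift k2 i); rewrite selL | exists (rshift k1 i); rewrite selR].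
  + by move=> [i]; case: (ordLR i) => [[j ->]|[j ->]]; rewrite ?selL ?selR => h; [left|right]; exists j.
- by move=> i; case: (ordLR i) => [[j ->]|[j ->]]; rewrite ?selL ?selR.
- move=> i j; case: (ordLR i) => [[i1 ->]|[i1 ->]]; case: (ordLR j) => [[j1 ->]|[j1 ->]];
    rewrite ?selL ?selR => ne.
  + by apply: Hd1'; apply: contraNneq ne => ->.
  + exact: sep_disj (sep_sub (sub1' i1) (sub2' j1) hsp').
  + rewrite setIC; exact: sep_disj (sep_sub (sub1' j1) (sub2' i1) hsp').
  + by apply: Hd2'; apply: contraNneq ne => ->.
- rewrite HP1' HP2'; apply/seteqP; split => x.
  + by case=> [[i h]|[i h]]; [exists (lshift k2 i); rewrite !selL | exists (rshift k1 i); rewrite !selR].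
  + by move=> [i]; case: (ordLR i) => [[j ->]|[j ->]]; rewrite ?selL ?selR => h; [left|right]; exists j.
- move=> y [[h1|h2] hb].
  + have := Hc1 y (conj h1 hb); apply: closure_mono => z [i hz].
    by exists (lshift k2 i); rewrite !selL.
  + have := Hc2 y (conj h2 hb); apply: closure_mono => z [i hz].
    by exists (rshift k1 i); rewrite !selR.
Qed.

End IOD.

Section Split.
Variable R : realType.
Notation point := (pt R).
Notation o0 := (@o4 0 isT).
Notation o1 := (@o4 1 isT).
Notation o2 := (@o4 2 isT).
Notation o3 := (@o4 3 isT).

Lemma disj_sub (X Y X' Y' : set point) : X' `<=` X -> Y' `<=` Y ->
  interior X `&` interior Y = set0 -> interior X' `&` interior Y' = set0.
Proof.
move=> h1 h2 h; apply/seteqP; split => // x [a b].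
by rewrite -h; split; [apply: interior_mono h1 _ a | apply: interior_mono h2 _ b].
Qed.

Lemma tetra_split (A B C D : point) : nondeg_tetra (mk4 A B C D) ->
  let X := 2^-1 *: (A + B) in
  [/\ nondeg_tetra (mk4 A X C D), nondeg_tetra (mk4 X B C D),
      conv_hull (mk4 A B C D) = conv_hull (mk4 A X C D) `|` conv_hull (mk4 X B C D)
    & sep (conv_hull (mk4 A X C D)) (conv_hull (mk4 X B C D))].
Proof.
move=> nd X.
have n2 : (2 : R) != 0 by rewrite pnatr_eq0.
have hd := nd; rewrite nondeg_mk4 in hd.
split.
- rewrite nondeg_mk4.
  have -> : det3v (X - A) (C - A) (D - A) = 2^-1 * det3v (B - A) (C - A) (D - A).
    by rewrite /det3v /X !mxE; field.
  by rewrite mulf_neq0 // invr_eq0.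
- rewrite nondeg_mk4.
  have -> : det3v (B - X) (C - X) (D - X) = 2^-1 * det3v (B - A) (C - A) (D - A).
    by rewrite /det3v /X !mxE; field.
  by rewrite mulf_neq0 // invr_eq0.
- apply/seteqP; split => x.
  + move/convP4 => [a [b [c [d [ha hb hc hd' [hs ->]]]]]].
    case: (lerP b a) => hab.
    * left; apply/convP4; exists (a - b), (2 * b), c, d; split; [lra|lra|lra|lra|split; first lra].
      by apply: ptP; rewrite /X !mxE; field.
    * right; apply/convP4; exists (2 * a), (b - a), c, d; split; [lra|lra|lra|lra|split; first lra].
      by apply: ptP; rewrite /X !mxE; field.
  + case => /convP4 [a [b [c [d [ha hb hc hd' [hs ->]]]]]]; apply/convP4.
    * exists (a + b / 2), (b / 2), c, d; split; [lra|lra|lra|lra|split; first lra].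
      by apply: ptP; rewrite /X !mxE; field.
    * exists (a / 2), (a / 2 + b), c, d; split; [lra|lra|lra|lra|split; first lra].
      by apply: ptP; rewrite /X !mxE; field.
- have [u [b0 hu]] := bary (mk4 (1 : R) (-1) 0 0) nd.
  have u0 : u != 0.
    apply: (@bary_nz _ _ u b0 (mk4 (1 : R) (-1) 0 0) o0 o1 hu).
    rewrite /mk4 /=; apply/eqP; lra.
  have hA : dot u A + b0 = 1 by have := hu o0.
  have hB : dot u B + b0 = -1 by have := hu o1.
  have hC : dot u C + b0 = 0 by have := hu o2.
  have hD : dot u D + b0 = 0 by have := hu o3.
  have hX : dot u X + b0 = 0.
    have : dot u X + b0 = 2^-1 * ((dot u A + b0) + (dot u B + b0)).
      by rewrite /X !dotE !mxE; field.
    by rewrite hA hB subrr mulr0.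
  exists u, b0; split => //; split => x /convP4 [a [b [c [d [ha hb hc hd' [hs ->]]]]]];
    rewrite dot4 //.
  + by rewrite hA hX hC hD; lra.
  + by rewrite hX hB hC hD; lra.
Qed.


Lemma closureU (X Y : set point) : closure (X `|` Y) `<=` closure X `|` closure Y.
Proof.
move=> x H; apply: contrapT => /not_orP [h1 h2].
move/existsNP: h1 => [e1 /not_implyP [e10 h1]].
move/existsNP: h2 => [e2 /not_implyP [e20 h2]].
have [y [hy hd]] : exists y, (X `|` Y) y /\ sqnorm (y - x) < Num.min e1 e2.
  by apply: H; rewrite lt_min e10 e20.
case: hy => hy.
- by apply: h1; exists y; split => //; apply: lt_le_trans hd _; rewrite ge_min lexx.
- by apply: h2; exists y; split => //; apply: lt_le_trans hd _; rewrite ge_min lexx orbT.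
Qed.

Lemma IOD_split (P P' S : set point) k : IOD P P' S k.+1 -> IOD P P' S k.+2.
Proof.
move=> [Pc [Q [t [Ht [Hd [HP [Hr [Hd' [HP' Hc]]]]]]]]].
have [p [np e0]] := Ht ord0.
rewrite (p_mk4 p) in np e0.
set A := p o0 in np e0; set B := p o1 in np e0; set C := p o2 in np e0; set D := p o3 in np e0.
have [nd1 nd2 eT sT] := tetra_split np.
set X := 2^-1 *: (A + B) in nd1 nd2 eT sT.
set T1 := conv_hull (mk4 A X C D) in nd1 nd2 eT sT.
set T2 := conv_hull (mk4 X B C D) in nd1 nd2 eT sT.
rewrite -e0 in eT.
pose g (i : 'I_k.+2) : 'I_k.+1 := if i == ord_max then ord0 else inord i.
pose Pc' (i : 'I_k.+2) := if i == ord_max then T2 else if i == ord0 then T1 else Pc (g i).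
have nm0 : (ord0 : 'I_k.+2) != ord_max by apply/eqP => /(congr1 val).
have g0 : g ord0 = ord0 by rewrite /g (negbTE nm0); apply/val_inj; rewrite /= inordK.
have gm : g ord_max = ord0 by rewrite /g eqxx.
have P0 : Pc' ord0 = T1 by rewrite /Pc' (negbTE nm0) eqxx.
have Pm : Pc' ord_max = T2 by rewrite /Pc' eqxx.
have sT1 : T1 `<=` Pc ord0 by rewrite eT => x h; left.
have sT2 : T2 `<=` Pc ord0 by rewrite eT => x h; right.
have G1 i : Pc' i `<=` Pc (g i).
  rewrite /Pc'; case: ifP => [/eqP -> | _]; first by rewrite gm.
  case: ifP => [/eqP -> | _] //; by rewrite g0.
have ltm (i : 'I_k.+2) : i != ord_max -> (i < k.+1)%N.
  move=> h; have := ltn_ord i; rewrite ltnS leq_eqVlt => /orP [/eqP e|] //.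
  by move: h; rewrite (_ : i = ord_max) ?eqxx //; apply/val_inj.
have G2 i j : i != j -> g i = g j -> (Pc' i = T1 /\ Pc' j = T2) \/ (Pc' i = T2 /\ Pc' j = T1).
  move=> ne e.
  have aux (a b : 'I_k.+2) : a == ord_max -> a != b -> g a = g b -> b = ord0.
    move=> /eqP ea nab; rewrite ea gm /g.
    have nb : b != ord_max by rewrite -ea eq_sym.
    rewrite (negbTE nb) => /(congr1 val) /=; rewrite inordK ?ltm // => e'.
    by apply/val_inj; rewrite /= -e'.
  case: (boolP (i == ord_max)) => him.
    have := aux _ _ him ne e => ->; right; by rewrite (eqP him) Pm P0.
  case: (boolP (j == ord_max)) => hjm.
    have nji : j != i by rewrite eq_sym.
    have -> := aux _ _ hjm nji (esym e); left; by rewrite (eqP hjm) Pm P0.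
  exfalso; move: ne; rewrite (_ : i = j) ?eqxx //; apply/val_inj.
  move: e; rewrite /g (negbTE him) (negbTE hjm) => /(congr1 val) /=.
  by rewrite !inordK ?ltm.
have G3 (j : 'I_k.+1) : j != ord0 -> exists i, g i = j /\ Pc' i = Pc j.
  move=> nj; exists (inord j).
  have lj : (j < k.+2)%N by apply: ltnW; rewrite ltnS.
  have nm : (inord j : 'I_k.+2) != ord_max.
    apply/eqP => /(congr1 val) /=; rewrite (inordK lj).
    move=> e; have := ltn_ord j; by rewrite e ltnn.
  have gi : g (inord j) = j.
    rewrite /g (negbTE nm); apply/val_inj; by rewrite /= (inordK lj) inord_val.
  split; first exact: gi.
  rewrite /Pc' (negbTE nm) gi.
  case: ifP => // /eqP /(congr1 val) /=; rewrite (inordK lj).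
  by move=> e; move: nj; rewrite (_ : j = ord0) ?eqxx //; apply/val_inj.
have hQ i : Q i *m (Q i)^T = 1%:M by have [] := Hr i.
exists Pc', (fun i => Q (g i)), (fun i => t (g i)).
split; [|split; [|split; [|split; [|split; [|split]]]]].
- move=> i; rewrite /Pc'; case: ifP => _; first by exists (mk4 X B C D).
  case: ifP => _; first by exists (mk4 A X C D).
  exact: Ht.
- move=> i j ne; case: (eqVneq (g i) (g j)) => e.
    case: (G2 i j ne e) => [[-> ->]|[-> ->]]; first exact: sep_disj.
    rewrite setIC; exact: sep_disj.
  exact: disj_sub (G1 i) (G1 j) (Hd _ _ e).
- rewrite HP; apply/seteqP; split => x.
    move=> [j h]; case: (eqVneq j ord0) => [ej|nj].
      move: h; rewrite ej eT => -[h|h]; [exists ord0; by rewrite P0 | exists ord_max; by rewrite Pm].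
    by have [i [_ Pi]] := G3 j nj; exists i; rewrite Pi.
  by move=> [i /G1 h]; exists (g i).
- by move=> i; apply: Hr.
- move=> i j ne; case: (eqVneq (g i) (g j)) => e.
    rewrite -e; case: (G2 i j ne e) => [[-> ->]|[-> ->]].
      exact: (disj_img (t (g i)) ltr01 (hQ (g i)) (sep_disj sT)).
    rewrite setIC; exact: (disj_img (t (g i)) ltr01 (hQ (g i)) (sep_disj sT)).
  apply: disj_sub (Hd' _ _ e); exact: image_subset.
- rewrite HP'; apply/seteqP; split => y.
    move=> [j [x h <-]]; case: (eqVneq j ord0) => [ej|nj].
      move: h; rewrite ej eT => -[h|h].
        by exists ord0; rewrite g0 P0; exists x.
      by exists ord_max; rewrite gm Pm; exists x.
    by have [i [gi Pi]] := G3 j nj; exists i; rewrite gi Pi; exists x.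
  by move=> [i [x /G1 h <-]]; exists (g i); exists x.
- move=> y hy; have := Hc y hy; apply: closure_mono.
  move=> z [j [x [[hc hni] hi] <-]]; case: (eqVneq j ord0) => [ej|nj].
    rewrite ej eT in hc hni.
    case: (closureU hc) => hc'.
      exists ord0; rewrite g0 P0 ej; exists x => //; split => //; split => // h.
      by apply: hni; apply: interior_mono h => w hw; left.
    exists ord_max; rewrite gm Pm ej; exists x => //; split => //; split => // h.
    by apply: hni; apply: interior_mono h => w hw; right.
  have [i [gi Pi]] := G3 j nj; exists i; rewrite gi Pi; by exists x.
Qed.

End Split.

Section Base.
Variable R : realType.
Notation point := (pt R).
Notation o0 := (@o4 0 isT).
Notation o1 := (@o4 1 isT).
Notation o2 := (@o4 2 isT).
Notation o3 := (@o4 3 isT).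

Lemma sqnormZ (a : R) (v : point) : sqnorm (a *: v) = a ^+ 2 * sqnorm v.
Proof. rewrite !sqnormE !mxE; ring. Qed.

Lemma IOD_splitn (P P' S : set point) k m : IOD P P' S k.+1 -> IOD P P' S (k.+1 + m).
Proof.
move=> h; elim: m => [|m IH]; first by rewrite addn0.
by rewrite addnS; move: IH; rewrite addSn => /IOD_split.
Qed.

Lemma IOD_base (A B C D : point) Q t0 (S : set point) :
  nondeg_tetra (mk4 A B C D) -> rotation_mx Q ->
  motion Q t0 A = B -> motion Q t0 B = A -> motion Q t0 C = D -> motion Q t0 D = C ->
  (forall a b c d : R, 0 <= a -> 0 <= b -> 0 <= c -> 0 <= d -> a + b + c + d = 1 -> 0 < b ->
      interior S (a *: A + b *: B + c *: C + d *: D)) ->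
  IOD (conv_hull (mk4 A B C D)) (conv_hull (mk4 A B C D)) S 1.
Proof.
move=> nd hQ mA mB mC mD HS.
set T := conv_hull (mk4 A B C D).
set M := motion Q t0.
have MT : M @` T = T.
  rewrite /T conv_img -conv_swap; apply: conv_ext => i.
  have -> : i = inord i by rewrite inord_val.
  by case: i => [[|[|[|[|//]]]] Hi]; rewrite /mk4 /= inordK.
have [u [b0 hu]] := bary (mk4 (1 : R) 0 0 0) nd.
have u0 : u != 0.
  apply: (@bary_nz _ _ u b0 (mk4 (1 : R) 0 0 0) o0 o1 hu).
  by rewrite /mk4 /= oner_eq0.
have hA : dot u A + b0 = 1 by have := hu o0.
have hB : dot u B + b0 = 0 by have := hu o1.
have hC : dot u C + b0 = 0 by have := hu o2.
have hD : dot u D + b0 = 0 by have := hu o3.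
have hT : forall x, T x -> 0 <= dot u x + b0.
  move=> x /convP4 [a [b [c [d [ha hb hc hd [hs ->]]]]]].
  by rewrite dot4 // hA hB hC hD; lra.
exists (fun _ => T), (fun _ => Q), (fun _ => t0).
split; [|split; [|split; [|split; [|split; [|split]]]]].
- by move=> i; exists (mk4 A B C D).
- by move=> i j; rewrite (ord1 i) (ord1 j) eqxx.
- by apply/seteqP; split => x; [move=> h; exists ord0 | move=> [_ h]].
- by [].
- by move=> i j; rewrite (ord1 i) (ord1 j) eqxx.
- rewrite -/M MT; by apply/seteqP; split => x; [move=> h; exists ord0 | move=> [_ h]].
- move=> x [hx [_ hnS]].
  move: (hx) => /convP4 [a [b [c [d [ha hb hc hd [hs ex]]]]]].
  have b0' : b = 0.
    case: (lerP b 0) => hb0; first lra.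
    by exfalso; apply: hnS; rewrite ex; apply: HS.
  move=> e he.
  set g := 3^-1 *: (A + C + D).
  have [tau [t0p t1 te]] := small_param (sqnorm_ge0 (g - x)) he.
  set b' := (1 - tau) * a + tau / 3.
  set c' := (1 - tau) * d + tau / 3.
  set d' := (1 - tau) * c + tau / 3.
  have hb' : 0 < b' by rewrite /b'; nra.
  have hc' : 0 <= c' by rewrite /c'; nra.
  have hd' : 0 <= d' by rewrite /d'; nra.
  have hs' : 0 + b' + c' + d' = 1.
    have -> : 0 + b' + c' + d' = (1 - tau) * (a + c + d) + tau by rewrite /b' /c' /d'; field.
    have -> : a + c + d = 1 by lra.
    ring.
  set z := 0 *: A + b' *: B + c' *: C + d' *: D.
  have Tz : T z by apply/convP4; exists 0, b', c', d'; split; [exact: lexx|exact: ltW|by []|by []|split].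
  exists (M z); split.
    exists ord0; exists z => //; split; last exact: HS (ltW hb') hc' hd' hs' hb'.
    split; first exact: sub_closure.
    apply: (sep_not_interior u0 hT).
    by rewrite /z dot4 // hA hB hC hD; lra.
  have -> : M z - x = tau *: (g - x).
    rewrite /M /z motion4 // mA mB mC mD ex /g /b' /c' /d'.
    have -> : a = 1 - c - d by lra.
    by rewrite b0'; apply: ptP; rewrite !mxE; field.
  by rewrite sqnormZ.
Qed.

Lemma IOD_final (P : set point) k : IOD P P P k -> closure P `<=` P -> inside_out_dissectable P k.
Proof.
move=> [Pc [Q [t [Ht [Hd [HP [Hr [Hd' [HP' Hc]]]]]]]]] cl.
exists Pc, Q, t.
split.
  move=> i; have [p [np ->]] := Ht i; exists 1%N, (fun _ => p); split => //; split => //.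
  by move=> x; split; [move=> h; exists ord0 | move=> [_ h]].
split => //; split; first by rewrite HP.
split => //; split => //.
rewrite /= -HP'; split.
  exists 1%:M, 0; split; first by rewrite /orthogonal_mx trmx1 mulmx1.
  apply/seteqP; split => x.
    by move=> h; exists x => //; rewrite /motion mulmx1 addr0.
  by move=> [y h <-]; rewrite /motion mulmx1 addr0.
move=> x hx; apply: Hc; split => //.
by apply: cl; case: hx.
Qed.

End Base.

Section Concrete.
Variable R : realType.
Notation point := (pt R).

Definition v3 (a b c : R) : point := \row_(j < 3) match (j : nat) with 0 => a | 1 => b | _ => c end.
Definition mxn (f : nat -> nat -> R) : 'M[R]_3 := \matrix_(i, j) f i j.

Ltac crunch := rewrite ?dotE ?sqnormE !mxE ?sum3 ?mxE /=.

Lemma v3_eta (x : point) : x = v3 (x 0 0) (x 0 1) (x 0 2).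
Proof. by apply: ptP; crunch. Qed.

Definition l1 (x : point) : R := `|x 0 0| + `|x 0 1| + `|x 0 2|.

Definition S0 : set point := regular_octahedron 0 1 1%:M.

Lemma absb (y : R) : - `|y| <= y <= `|y|.
Proof. by rewrite -ler_norml. Qed.

Definition o6 (k : nat) (h : (k < 6)%N) : 'I_6 := Ordinal h.

Lemma sum6 (V : nmodType) (F : 'I_6 -> V) :
  \sum_(i < 6) F i = F (@o6 0 isT) + F (@o6 1 isT) + F (@o6 2 isT) + F (@o6 3 isT)
    + F (@o6 4 isT) + F (@o6 5 isT).
Proof.
rewrite !big_ord_recl big_ord0 addr0 !addrA.
set f := fun i : nat => F (inord i).
have E : forall i : 'I_6, F i = f i by move=> i; rewrite /f inord_val.
by rewrite !E.
Qed.

Lemma inord_mod (k : nat) (i : 'I_3) : (k %% 3 = i)%N -> (inord (k %% 3) : 'I_3) = i.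
Proof. by move=> h; apply/val_inj; rewrite /= inordK ?h // ltn_pmod. Qed.

Lemma ov0 : oct_vertex 0 1 1%:M (@o6 0 isT) = v3 1 0 0 :> point.
Proof. rewrite /oct_vertex (@inord_mod 0 0) //; apply: ptP; crunch; ring. Qed.
Lemma ov1 : oct_vertex 0 1 1%:M (@o6 1 isT) = v3 0 1 0 :> point.
Proof. rewrite /oct_vertex (@inord_mod 1 1) //; apply: ptP; crunch; ring. Qed.
Lemma ov2 : oct_vertex 0 1 1%:M (@o6 2 isT) = v3 0 0 1 :> point.
Proof. rewrite /oct_vertex (@inord_mod 2 2) //; apply: ptP; crunch; ring. Qed.
Lemma ov3 : oct_vertex 0 1 1%:M (@o6 3 isT) = v3 (-1) 0 0 :> point.
Proof. rewrite /oct_vertex (@inord_mod 3 0) //; apply: ptP; crunch; ring. Qed.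
Lemma ov4 : oct_vertex 0 1 1%:M (@o6 4 isT) = v3 0 (-1) 0 :> point.
Proof. rewrite /oct_vertex (@inord_mod 4 1) //; apply: ptP; crunch; ring. Qed.
Lemma ov5 : oct_vertex 0 1 1%:M (@o6 5 isT) = v3 0 0 (-1) :> point.
Proof. rewrite /oct_vertex (@inord_mod 5 2) //; apply: ptP; crunch; ring. Qed.


Lemma absab (a b : R) : 0 <= a -> 0 <= b -> `|a - b| <= a + b.
Proof. move=> ha hb; rewrite ler_norml; apply/andP; split; lra. Qed.

Lemma S0P x : S0 x <-> l1 x <= 1.
Proof.
rewrite /S0 /regular_octahedron /conv_hull; split.
- move=> [w [w0 [w1 ex]]]; rewrite sum6 in w1.
  rewrite sum6 ov0 ov1 ov2 ov3 ov4 ov5 in ex.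
  have e0 : x 0 0 = w (@o6 0 isT) - w (@o6 3 isT) by rewrite ex; crunch; ring.
  have e1 : x 0 1 = w (@o6 1 isT) - w (@o6 4 isT) by rewrite ex; crunch; ring.
  have e2 : x 0 2 = w (@o6 2 isT) - w (@o6 5 isT) by rewrite ex; crunch; ring.
  rewrite /l1 e0 e1 e2.
  have := absab (w0 (@o6 0 isT)) (w0 (@o6 3 isT)).
  have := absab (w0 (@o6 1 isT)) (w0 (@o6 4 isT)).
  have := absab (w0 (@o6 2 isT)) (w0 (@o6 5 isT)).
  lra.
- move=> hx.
  set sl := (1 - l1 x) / 6.
  have hsl : 0 <= sl by rewrite /sl; apply: divr_ge0; lra.
  pose a k := `|x 0 k|.
  pose w (i : 'I_6) : R := nth 0 [:: (a 0 + x 0 0) / 2 + sl; (a 1 + x 0 1) / 2 + sl;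
     (a 2 + x 0 2) / 2 + sl; (a 0 - x 0 0) / 2 + sl; (a 1 - x 0 1) / 2 + sl;
     (a 2 - x 0 2) / 2 + sl] i.
  exists w; split; [|split].
  + have h0 := absb (x 0 0); have h1 := absb (x 0 1); have h2 := absb (x 0 2).
    move=> i; have -> : i = inord i by rewrite inord_val.
    case: i => [[|[|[|[|[|[|//]]]]]] Hi]; rewrite /w inordK //= /a; lra.
  + by rewrite sum6 /w /= /sl /a; move: hx; rewrite /l1 => hx; field.
  + by rewrite sum6 ov0 ov1 ov2 ov3 ov4 ov5 /w /=; apply: ptP; crunch; rewrite /a; field.
Qed.

Lemma diff_bound (x y : point) (k : 'I_3) : `|y 0 k| <= `|x 0 k| + `|(y - x) 0 k|.
Proof.
have := ler_normD (x 0 k) ((y - x) 0 k); rewrite !mxE.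
by rewrite addrCA subrr addr0.
Qed.

Lemma diff_bound' (x y : point) (k : 'I_3) : `|x 0 k| <= `|y 0 k| + `|(y - x) 0 k|.
Proof.
have := ler_normD (y 0 k) (- (y - x) 0 k); rewrite normrN !mxE.
by rewrite opprB addrCA subrr addr0.
Qed.

Lemma l1_interior x : l1 x < 1 -> interior S0 x.
Proof.
move=> hx; set d := (1 - l1 x) / 3.
have d0 : 0 < d by rewrite /d; apply: divr_gt0; lra.
exists (d ^+ 2); split; first exact: exprn_gt0.
move=> y hy; apply/S0P.
have c0 := coord_lt 0 d0 hy; have c1 := coord_lt 1 d0 hy; have c2 := coord_lt 2 d0 hy.
have b0 := diff_bound x y 0; have b1 := diff_bound x y 1; have b2 := diff_bound x y 2.
have hd : 3 * d = 1 - l1 x by rewrite /d; field.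
move: hx hd; rewrite /l1 => hx hd; lra.
Qed.

Lemma S0_closed : closure S0 `<=` S0.
Proof.
move=> x hx; apply/S0P; apply: contrapT => /negP; rewrite -ltNge => hl.
set d := (l1 x - 1) / 3.
have d0 : 0 < d by rewrite /d; apply: divr_gt0; lra.
have [y [/S0P Sy hy]] := hx (d ^+ 2) (exprn_gt0 2 d0).
have c0 := coord_lt 0 d0 hy; have c1 := coord_lt 1 d0 hy; have c2 := coord_lt 2 d0 hy.
have b0 := diff_bound' x y 0; have b1 := diff_bound' x y 1; have b2 := diff_bound' x y 2.
have hd : 3 * d = l1 x - 1 by rewrite /d; field.
move: hl Sy hd; rewrite /l1 => hl Sy hd; lra.
Qed.

Lemma norm4 (a b c d p q r s : R) : 0 <= a -> 0 <= b -> 0 <= c -> 0 <= d ->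
  `|a * p + b * q + c * r + d * s| <= a * `|p| + b * `|q| + c * `|r| + d * `|s|.
Proof.
move=> ha hb hc hd.
apply: le_trans (ler_normD _ _) _; rewrite normrM (ger0_norm hd) lerD2r.
apply: le_trans (ler_normD _ _) _; rewrite normrM (ger0_norm hc) lerD2r.
apply: le_trans (ler_normD _ _) _; rewrite !normrM (ger0_norm hb) (ger0_norm ha) //.
Qed.

Lemma conv_S0 (A B C D : point) : S0 A -> S0 B -> S0 C -> S0 D ->
  conv_hull (mk4 A B C D) `<=` S0.
Proof.
move=> /S0P hA /S0P hB /S0P hC /S0P hD x /convP4 [a [b [c [d [ha hb hc hd [hs ->]]]]]].
apply/S0P; rewrite /l1 !mxE.
have n0 := norm4 (A 0 0) (B 0 0) (C 0 0) (D 0 0) ha hb hc hd.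
have n1 := norm4 (A 0 1) (B 0 1) (C 0 1) (D 0 1) ha hb hc hd.
have n2 := norm4 (A 0 2) (B 0 2) (C 0 2) (D 0 2) ha hb hc hd.
move: hA hB hC hD; rewrite /l1 => hA hB hC hD.
have tA : a * `|A 0 0| + a * `|A 0 1| + a * `|A 0 2| <= a by nra.
have tB : b * `|B 0 0| + b * `|B 0 1| + b * `|B 0 2| <= b by nra.
have tC : c * `|C 0 0| + c * `|C 0 1| + c * `|C 0 2| <= c by nra.
have tD : d * `|D 0 0| + d * `|D 0 1| + d * `|D 0 2| <= d by nra.
lra.
Qed.

End Concrete.

Section Concrete2.
Variable R : realType.
Notation point := (pt R).
Notation v3 := (@v3 R).
Notation S0 := (@S0 R).

Ltac crunch := rewrite ?dotE ?sqnormE !mxE ?sum3 ?mxE /=.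

Definition O : point := v3 0 0 0.
Definition e1 : point := v3 1 0 0.
Definition e2 : point := v3 0 1 0.
Definition e3 : point := v3 0 0 1.
Definition m12 : point := v3 2^-1 2^-1 0.
Definition m13 : point := v3 2^-1 0 2^-1.
Definition m23 : point := v3 0 2^-1 2^-1.

Definition Qx : 'M[R]_3 := mxn (fun i j => match i, j with 0,0 => -1 | 1,2 => 1 | 2,1 => 1 | _,_ => 0 end).
Definition Qz : 'M[R]_3 := mxn (fun i j => match i, j with 0,0 => -1 | 1,1 => -1 | 2,2 => 1 | _,_ => 0 end).
Definition Rho : 'M[R]_3 := mxn (fun i j => match i, j with 0,1 => 1 | 1,2 => 1 | 2,0 => 1 | _,_ => 0 end).
Definition sgn (b : bool) : R := if b then 1 else -1.
Definition Sg (a b c : bool) : 'M[R]_3 :=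
  mxn (fun i j => match i, j with 0,0 => sgn a | 1,1 => sgn b | 2,2 => sgn c | _,_ => 0 end).

Lemma rot_Qx : rotation_mx Qx.
Proof.
split; last by rewrite det3 !mxE /=; ring.
apply/matrixP => i j; rewrite !mxE sum3 !mxE /=.
by case: i => [[|[|[|//]]] ?]; case: j => [[|[|[|//]]] ?] /=; ring.
Qed.

Lemma rot_Qz : rotation_mx Qz.
Proof.
split; last by rewrite det3 !mxE /=; ring.
apply/matrixP => i j; rewrite !mxE sum3 !mxE /=.
by case: i => [[|[|[|//]]] ?]; case: j => [[|[|[|//]]] ?] /=; ring.
Qed.

Lemma rot_Rho : rotation_mx Rho.
Proof.
split; last by rewrite det3 !mxE /=; ring.
apply/matrixP => i j; rewrite !mxE sum3 !mxE /=.
by case: i => [[|[|[|//]]] ?]; case: j => [[|[|[|//]]] ?] /=; ring.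
Qed.

Lemma sgn2 b : sgn b * sgn b = 1.
Proof. by case: b; rewrite /sgn /=; ring. Qed.

Lemma orth_Sg a b c : Sg a b c *m (Sg a b c)^T = 1%:M.
Proof.
apply/matrixP => i j; rewrite !mxE sum3 !mxE /=.
case: i => [[|[|[|//]]] ?]; case: j => [[|[|[|//]]] ?] /=;
  rewrite ?mulr0 ?mul0r ?addr0 ?add0r ?sgn2 //.
Qed.

Lemma ltr01' : (0 : R) < 1. Proof. exact: ltr01. Qed.

Lemma l1_pos (x : point) : 0 <= x 0 0 -> 0 <= x 0 1 -> 0 <= x 0 2 ->
  l1 x = x 0 0 + x 0 1 + x 0 2.
Proof. by move=> h0 h1 h2; rewrite /l1 !ger0_norm. Qed.

Lemma v3_neq0 a b c : a != 0 -> v3 a b c != 0.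
Proof. by move=> ha; apply/eqP => /(congr1 (fun v : point => v 0 0)); rewrite !mxE /= => /eqP; rewrite (negbTE ha). Qed.

Lemma conv_img4 Q t (A B C D : point) :
  motion Q t @` conv_hull (mk4 A B C D) =
  conv_hull (mk4 (motion Q t A) (motion Q t B) (motion Q t C) (motion Q t D)).
Proof.
rewrite conv_img; apply: conv_ext => i.
have -> : i = inord i by rewrite inord_val.
by case: i => [[|[|[|[|//]]]] Hi]; rewrite /mk4 /= inordK.
Qed.

Lemma imgP1 (M : 'M[R]_3) (X : set point) y : M *m M^T = 1%:M ->
  (motion M 0 @` X) y <-> X (y *m M^T).
Proof.
move=> hM; have := @imgP R M 1 0 ltr01' hM X y.
rewrite /psi /phi /Ainv /motion invr1 scale1r mul0mx oppr0 !addr0.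
by [].
Qed.

Lemma img_S0 (M : 'M[R]_3) : M *m M^T = 1%:M -> (forall x, l1 (x *m M^T) = l1 x) ->
  motion M 0 @` S0 = S0.
Proof.
move=> hM hl; apply/seteqP; split => y.
- by move/(imgP1 _ _ hM) => /S0P; rewrite hl => /S0P.
- by move=> /S0P h; apply/(imgP1 _ _ hM); apply/S0P; rewrite hl.
Qed.

Lemma Rho_S0 : motion Rho 0 @` S0 = S0.
Proof.
have [hR _] := rot_Rho; apply: img_S0 => // x.
rewrite /l1; crunch; rewrite !mulr0 !mulr1 !addr0 !add0r.
by rewrite addrC addrA.
Qed.

Lemma Sg_S0 a b c : motion (Sg a b c) 0 @` S0 = S0.
Proof.
apply: img_S0; first exact: orth_Sg.
move=> x; rewrite /l1; crunch; rewrite !mulr0 !addr0 !add0r !normrM.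
by case: a; case: b; case: c; rewrite /sgn ?normrN ?normr1 !mulr1.
Qed.

End Concrete2.

Section Concrete3.
Variable R : realType.
Notation point := (pt R).
Notation v3 := (@v3 R).
Notation S0 := (@S0 R).
Notation O := (@O R). Notation e1 := (@e1 R). Notation e2 := (@e2 R). Notation e3 := (@e3 R).
Notation m12 := (@m12 R). Notation m13 := (@m13 R). Notation m23 := (@m23 R).

Ltac crunch := rewrite ?dotE ?sqnormE !mxE ?sum3 ?mxE /=.

Lemma int_l1 (x : point) : 0 <= x 0 0 -> 0 <= x 0 1 -> 0 <= x 0 2 ->
  x 0 0 + x 0 1 + x 0 2 < 1 -> interior S0 x.
Proof. by move=> h0 h1 h2 h; apply: l1_interior; rewrite l1_pos. Qed.

Definition TQ1 := conv_hull (mk4 e1 O m12 m13).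
Definition TQ2 := conv_hull (mk4 e2 O m23 m12).
Definition TQ3 := conv_hull (mk4 e3 O m13 m23).
Definition TT := conv_hull (mk4 m12 O m23 m13).

Lemma base_Q1 : IOD TQ1 TQ1 S0 1.
Proof.
apply: (@IOD_base _ _ _ _ _ (Qx R) e1).
- rewrite nondeg_mk4 /det3v; crunch; apply/eqP => h; lra.
- exact: rot_Qx.
- by apply: ptP; crunch; field.
- by apply: ptP; crunch; field.
- by apply: ptP; crunch; field.
- by apply: ptP; crunch; field.
- move=> a b c d ha hb hc hd hs hb0; apply: int_l1; crunch; lra.
Qed.

Lemma base_T : IOD TT TT S0 1.
Proof.
apply: (@IOD_base _ _ _ _ _ (Qz R) m12).
- rewrite nondeg_mk4 /det3v; crunch; apply/eqP => h; lra.
- exact: rot_Qz.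
- by apply: ptP; crunch; field.
- by apply: ptP; crunch; field.
- by apply: ptP; crunch; field.
- by apply: ptP; crunch; field.
- move=> a b c d ha hb hc hd hs hb0; apply: int_l1; crunch; lra.
Qed.

Lemma hRho : Rho R *m (Rho R)^T = 1%:M.
Proof. by have [] := rot_Rho R. Qed.

Lemma base_Q2 : IOD TQ2 TQ2 S0 1.
Proof.
have := IOD_transfer 0 (@ltr01' R) hRho base_Q1.
rewrite /phi Rho_S0 /TQ1 conv_img4.
have -> : motion (Rho R) 0 e1 = e2 by apply: ptP; crunch; field.
have -> : motion (Rho R) 0 O = O by apply: ptP; crunch; field.
have -> : motion (Rho R) 0 m12 = m23 by apply: ptP; crunch; field.
have -> : motion (Rho R) 0 m13 = m12 by apply: ptP; crunch; field.
by [].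
Qed.

Lemma base_Q3 : IOD TQ3 TQ3 S0 1.
Proof.
have := IOD_transfer 0 (@ltr01' R) hRho base_Q2.
rewrite /phi Rho_S0 /TQ2 conv_img4.
have -> : motion (Rho R) 0 e2 = e3 by apply: ptP; crunch; field.
have -> : motion (Rho R) 0 O = O by apply: ptP; crunch; field.
have -> : motion (Rho R) 0 m23 = m13 by apply: ptP; crunch; field.
have -> : motion (Rho R) 0 m12 = m23 by apply: ptP; crunch; field.
by [].
Qed.

End Concrete3.

Section Concrete4.
Variable R : realType.
Notation point := (pt R).
Notation v3 := (@v3 R).
Notation S0 := (@S0 R).
Notation O := (@O R). Notation e1 := (@e1 R). Notation e2 := (@e2 R). Notation e3 := (@e3 R).
Notation m12 := (@m12 R). Notation m13 := (@m13 R). Notation m23 := (@m23 R).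
Notation TQ1 := (@TQ1 R). Notation TQ2 := (@TQ2 R). Notation TQ3 := (@TQ3 R). Notation TT := (@TT R).

Ltac crunch := rewrite ?dotE ?sqnormE !mxE ?sum3 ?mxE /=.

Lemma conv_half (u : point) b (A B C D : point) :
  0 <= dot u A + b -> 0 <= dot u B + b -> 0 <= dot u C + b -> 0 <= dot u D + b ->
  forall x, conv_hull (mk4 A B C D) x -> 0 <= dot u x + b.
Proof.
move=> hA hB hC hD x /convP4 [a1 [a2 [a3 [a4 [h1 h2 h3 h4 [hs ->]]]]]].
rewrite dot4 //.
by rewrite !addr_ge0 // mulr_ge0.
Qed.

Lemma conv_half' (u : point) b (A B C D : point) :
  dot u A + b <= 0 -> dot u B + b <= 0 -> dot u C + b <= 0 -> dot u D + b <= 0 ->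
  forall x, conv_hull (mk4 A B C D) x -> dot u x + b <= 0.
Proof.
move=> hA hB hC hD x /convP4 [a1 [a2 [a3 [a4 [h1 h2 h3 h4 [hs ->]]]]]].
rewrite dot4 //.
rewrite -oppr_ge0 !opprD !addr_ge0 // -mulrN mulr_ge0 // oppr_ge0 //.
Qed.

Ltac vchk := rewrite /O /e1 /e2 /e3 /m12 /m13 /m23; crunch; lra.

Lemma s3 : sep TQ3 TT.
Proof.
exists (v3 (-1) (-1) 1), 0; split; first by apply: v3_neq0; rewrite oppr_eq0 oner_eq0.
split => x.
- by apply: conv_half; vchk.
- by apply: conv_half'; vchk.
Qed.

Lemma s2 : sep TQ2 (TQ3 `|` TT).
Proof.
exists (v3 (-1) 1 (-1)), 0; split; first by apply: v3_neq0; rewrite oppr_eq0 oner_eq0.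
split => x.
- by apply: conv_half; vchk.
- by case; apply: conv_half'; vchk.
Qed.

Lemma s1 : sep TQ1 (TQ2 `|` (TQ3 `|` TT)).
Proof.
exists (v3 1 (-1) (-1)), 0; split; first by apply: v3_neq0; rewrite oner_eq0.
split => x.
- by apply: conv_half; vchk.
- by case; [|case]; apply: conv_half'; vchk.
Qed.

Definition Tplus := TQ1 `|` (TQ2 `|` (TQ3 `|` TT)).

Lemma IOD_Tplus : IOD Tplus Tplus S0 4.
Proof.
exact: (IOD_union (base_Q1 R) (IOD_union (base_Q2 R) (IOD_union (base_Q3 R) (base_T R) s3 s3) s2 s2) s1 s1).
Qed.

Lemma S0_v3 a b c : 0 <= a -> 0 <= b -> 0 <= c -> a + b + c <= 1 -> S0 (v3 a b c).
Proof. move=> ha hb hc h; apply/S0P; rewrite l1_pos; crunch => //. Qed.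

Ltac s0chk := rewrite /O /e1 /e2 /e3 /m12 /m13 /m23; apply: S0_v3; lra.

Lemma Tplus_S0 : Tplus `<=` S0.
Proof.
move=> x; case; [|case; [|case]]; apply: conv_S0; s0chk.
Qed.

Lemma Tplus_pos x : Tplus x -> [/\ 0 <= x 0 0, 0 <= x 0 1 & 0 <= x 0 2].
Proof.
move=> hx.
have H (u : point) : (forall y, Tplus y -> 0 <= dot u y + 0) -> 0 <= dot u x + 0.
  by move=> h; apply: h.
have k0 := H (v3 1 0 0); have k1 := H (v3 0 1 0); have k2 := H (v3 0 0 1).
rewrite !dotE !mxE /= in k0 k1 k2.
split.
- suff: 0 <= 1 * x 0 0 + 0 * x 0 1 + 0 * x 0 2 + 0 by lra.
  by apply: k0 => y; case; [|case; [|case]]; apply: conv_half; vchk.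
- suff: 0 <= 0 * x 0 0 + 1 * x 0 1 + 0 * x 0 2 + 0 by lra.
  by apply: k1 => y; case; [|case; [|case]]; apply: conv_half; vchk.
- suff: 0 <= 0 * x 0 0 + 0 * x 0 1 + 1 * x 0 2 + 0 by lra.
  by apply: k2 => y; case; [|case; [|case]]; apply: conv_half; vchk.
Qed.

Lemma Tplus_mem (x : point) : 0 <= x 0 0 -> 0 <= x 0 1 -> 0 <= x 0 2 ->
  x 0 0 + x 0 1 + x 0 2 <= 1 -> Tplus x.
Proof.
move=> h0 h1 h2 hs.
case: (lerP ((x 0 1) + (x 0 2)) (x 0 0)) => c1.
  left; apply/convP4; exists ((x 0 0) - (x 0 1) - (x 0 2)), (1 - (x 0 0) - (x 0 1) - (x 0 2)), (2 * (x 0 1)), (2 * (x 0 2)).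
  split; [lra|lra|lra|lra|split; first lra].
  by apply: ptP; rewrite /O /e1 /m12 /m13; crunch; field.
case: (lerP ((x 0 0) + (x 0 2)) (x 0 1)) => c2.
  right; left; apply/convP4; exists ((x 0 1) - (x 0 0) - (x 0 2)), (1 - (x 0 0) - (x 0 1) - (x 0 2)), (2 * (x 0 2)), (2 * (x 0 0)).
  split; [lra|lra|lra|lra|split; first lra].
  by apply: ptP; rewrite /O /e2 /m12 /m23; crunch; field.
case: (lerP ((x 0 0) + (x 0 1)) (x 0 2)) => c3.
  right; right; left; apply/convP4; exists ((x 0 2) - (x 0 0) - (x 0 1)), (1 - (x 0 0) - (x 0 1) - (x 0 2)), (2 * (x 0 0)), (2 * (x 0 1)).
  split; [lra|lra|lra|lra|split; first lra].
  by apply: ptP; rewrite /O /e3 /m13 /m23; crunch; field.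
right; right; right; apply/convP4.
exists ((x 0 0) + (x 0 1) - (x 0 2)), (1 - (x 0 0) - (x 0 1) - (x 0 2)), ((x 0 1) + (x 0 2) - (x 0 0)), ((x 0 0) + (x 0 2) - (x 0 1)).
split; [lra|lra|lra|lra|split; first lra].
by apply: ptP; rewrite /O /m12 /m13 /m23; crunch; field.
Qed.

End Concrete4.

Section Concrete5.
Variable R : realType.
Notation point := (pt R).
Notation v3 := (@v3 R).
Notation S0 := (@S0 R).
Notation Tplus := (@Tplus R).
Notation Sg := (@Sg R).
Notation sgn := (@sgn R).

Ltac crunch := rewrite ?dotE ?sqnormE !mxE ?sum3 ?mxE /=.

Definition Oct a b c : set point := motion (Sg a b c) 0 @` Tplus.

Lemma IOD_Oct a b c : IOD (Oct a b c) (Oct a b c) S0 4.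
Proof.
have := IOD_transfer 0 (@ltr01' R) (orth_Sg R a b c) (IOD_Tplus R).
by rewrite /phi Sg_S0.
Qed.

Lemma Oct_S0 a b c : Oct a b c `<=` S0.
Proof. rewrite -(Sg_S0 R a b c); apply: image_subset; exact: Tplus_S0. Qed.

Lemma Oct_sign a b c x : Oct a b c x ->
  [/\ 0 <= sgn a * x 0 0, 0 <= sgn b * x 0 1 & 0 <= sgn c * x 0 2].
Proof.
move=> [y /Tplus_pos [h0 h1 h2] <-].
rewrite /motion; crunch; rewrite !mulr0 !addr0 !add0r.
by rewrite !(mulrC (sgn _)) -!mulrA !sgn2 !mulr1.
Qed.

Lemma Oct_mem a b c x : S0 x -> 0 <= sgn a * x 0 0 -> 0 <= sgn b * x 0 1 -> 0 <= sgn c * x 0 2 ->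
  Oct a b c x.
Proof.
move=> /S0P hx h0 h1 h2.
exists (x *m Sg a b c).
  apply: Tplus_mem; crunch; rewrite ?mulr0 ?addr0 ?add0r ?(mulrC _ (sgn _)) //.
  move: hx; rewrite /l1.
  have e (s : bool) (y : R) : 0 <= sgn s * y -> `|y| = sgn s * y.
    by move=> h; rewrite -(ger0_norm h) normrM; case: s {h}; rewrite /sgn ?normrN normr1 mul1r.
  by rewrite (e a _ h0) (e b _ h1) (e c _ h2).
rewrite /motion addr0; apply: ptP; (do ! rewrite !mxE ?sum3 /=);
  rewrite ?mulr0 ?addr0 ?add0r ?mul0r -?mulrA ?sgn2 ?mulr1 //.
Qed.

Lemma sep_oct (u : point) (X Y : set point) : u != 0 ->
  (forall x, X x -> 0 <= dot u x) -> (forall x, Y x -> dot u x <= 0) -> sep X Y.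
Proof.
move=> u0 hX hY; exists u, 0; split => //; split => x h; rewrite addr0; [exact: hX | exact: hY].
Qed.

Definition Half a b := Oct a b true `|` Oct a b false.
Definition Quarter a := Half a true `|` Half a false.
Definition Full := Quarter true `|` Quarter false.

Lemma IOD_Half a b : IOD (Half a b) (Half a b) S0 8.
Proof.
have sp : sep (Oct a b true) (Oct a b false).
  apply: (@sep_oct (v3 0 0 1)); first by apply/eqP => /(congr1 (fun v : point => v 0 2)); rewrite !mxE /= => /eqP; rewrite oner_eq0.
  - move=> x /Oct_sign [_ _]; rewrite /sgn dotE !mxE /=; lra.
  - move=> x /Oct_sign [_ _]; rewrite /sgn dotE !mxE /=; lra.
exact: (IOD_union (IOD_Oct a b true) (IOD_Oct a b false) sp sp).
Qed.

Lemma IOD_Quarter a : IOD (Quarter a) (Quarter a) S0 16.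
Proof.
have sp : sep (Half a true) (Half a false).
  apply: (@sep_oct (v3 0 1 0)); first by apply/eqP => /(congr1 (fun v : point => v 0 1)); rewrite !mxE /= => /eqP; rewrite oner_eq0.
  - by move=> x [] /Oct_sign [_]; rewrite /sgn dotE !mxE /=; lra.
  - by move=> x [] /Oct_sign [_]; rewrite /sgn dotE !mxE /=; lra.
exact: (IOD_union (IOD_Half a true) (IOD_Half a false) sp sp).
Qed.

Lemma IOD_Full : IOD Full Full S0 32.
Proof.
have sp : sep (Quarter true) (Quarter false).
  apply: (@sep_oct (v3 1 0 0)); first by apply: v3_neq0; rewrite oner_eq0.
  - by move=> x [] [] /Oct_sign []; rewrite /sgn dotE !mxE /=; lra.
  - by move=> x [] [] /Oct_sign []; rewrite /sgn dotE !mxE /=; lra.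
exact: (IOD_union (IOD_Quarter true) (IOD_Quarter false) sp sp).
Qed.

Lemma Full_S0 : Full = S0.
Proof.
apply/seteqP; split.
- by move=> x [] [] [] /Oct_S0.
- move=> x hx.
  have pick (y : R) : exists s : bool, 0 <= sgn s * y.
    case: (lerP 0 y) => h; first by exists true; rewrite /sgn mul1r.
    by exists false; rewrite /sgn mulN1r; lra.
  have [a ha] := pick (x 0 0); have [b hb] := pick (x 0 1); have [c hc] := pick (x 0 2).
  have := Oct_mem hx ha hb hc.
  by case: a {ha}; case: b {hb}; case: c {hc} => h;
    rewrite /Full /Quarter /Half; [left;left;left|left;left;right|left;right;left|left;right;right
      |right;left;left|right;left;right|right;right;left|right;right;right].
Qed.

Lemma IOD_S0_124 : IOD S0 S0 S0 124.
Proof.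
have := IOD_splitn 92 IOD_Full; rewrite Full_S0; exact.
Qed.

End Concrete5.

Unset Implicit Arguments.
Local Close Scope classical_set_scope.
Theorem lemma4 (R : realType) (c : pt R) (r : R) (U : 'M[R]_3) :
  0 < r -> orthogonal_mx U ->
  inside_out_dissectable (regular_octahedron c r U) 124.
Proof.
move=> hr hU.
have hs : 0 < r ^+ 2 by exact: exprn_gt0.
have hA : (r *: U) *m (r *: U)^T = (r ^+ 2)%:M.
  rewrite trmxZ' -scalemxAl -scalemxAr scalerA hU scale_scalar_mx mulr1.
  by rewrite expr2.
have E : (phi (r *: U) c @` @S0 R)%classic = regular_octahedron c r U.
  rewrite /phi /S0 /regular_octahedron conv_img; apply: conv_ext => j.
  rewrite /oct_vertex /motion add0r -scalemxAl -scalemxAr -row_mul mul1mx.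
  rewrite scalerA addrC; congr (_ + _); congr (_ *: _).
  by case: ifP; rewrite ?mul1r ?mulN1r.
have H := IOD_transfer c hs hA (@IOD_S0_124 R).
rewrite E in H.
apply: IOD_final => //.
rewrite -E (closure_img c hs hA).
exact: image_subset (@S0_closed R).
Qed.
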